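(* Let $G$ be a signed graph and $H$ a facet subgraph of $G$. Then exactly one component $G_1$ of $G$ is not a component of $H$ (i.e. all edges of $G\setminus H$ lie in $G_1$, and every component of $G$ other than $G_1$ is a component of $H$). Moreover, if the vertex set of $G_1$ is the union of the vertex sets of exactly two components $H_1,H_2$ of $H$, where $H_1$ is a bipartite component of $H$ that is not a component of $G$, then $G_1$ is bipartite if and only if $H_2$ is bipartite.
   Context: A signed graph $G$ on vertex set $\{1,\dots,n\}$ is a finite undirected graph, possibly with loops but without multiple edges, together with a sign function $\mathrm{sgn}:E(G)\to\{+1,-1\}$; an edge $ij$ of sign $\pm1$ is written $\pm ij$. Subgraphs are spanning: a subgraph $H$ of $G$ has vertex set $\{1,\dots,n\}$ and a subset of the edges of $G$ with the same signs; $G\setminus H$ denotes the set of edges of $G$ not in $H$. A component is a maximal connected subgraph (an isolated vertex is a component). A component is bipartite if its vertex set can be partitioned into sets $L,R$ (one possibly empty) with every edge of the component having exactly one endpoint in each (a component with a loop is not bipartite). $\mathrm{bicomp}(\cdot)$ is the number of bipartite components. A subgraph $H$ of $G$ is a facet subgraph if (1) $\mathrm{bicomp}(H)=\mathrm{bicomp}(G)+1$, and (2) for any bipartite component $H'$ of $H$ which is not a component of $G$, there is a bipartition $V(H')=L\cup R$ such that every edge $e\in G\setminus H$ is either a positive edge with at least one endpoint in $L$ and no endpoint in $R$, or a negative edge with at least one endpoint in $R$ and no endpoint in $L$. *)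

(* Defs.v *)
From mathcomp Require Import all_boot.
Set Implicit Arguments. Unset Strict Implicit. Unset Printing Implicit Defensive.

(* Signed graphs on the vertex set {1,...,n}, represented by 'I_n (0-based).
   An edge {i,j} (possibly a loop i = j) is stored once as the ordered pair
   (i,j) with i <= j (so no multiple edges); the edge set is E : {set 'I_n * 'I_n}.
   The sign function is sgn : 'I_n * 'I_n -> bool, with true = +1, false = -1
   (only its values on E matter).
   A (spanning) subgraph H of G is given by its edge set S \subset E; its signs
   are those of G. *)

Section SignedGraphs.
Variable n : nat.
Notation V := 'I_n.
Notation edge := (V * V)%type.

Definition adj (S : {set edge}) : rel V :=
  fun x y => ((x, y) \in S) || ((y, x) \in S).

Definition comps (S : {set edge}) : {set {set V}} :=
  [set [set y | connect (adj S) x y] | x : V].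

Definition edges_in (S : {set edge}) (C : {set V}) : {set edge} :=
  [set e in S | (e.1 \in C) || (e.2 \in C)].

Definition is_bipartition (S : {set edge}) (C L R : {set V}) : bool :=
  [&& L :|: R == C, L :&: R == set0 &
      [forall e in edges_in S C,
         ((e.1 \in L) && (e.2 \in R)) || ((e.1 \in R) && (e.2 \in L))]].

Definition bipartite (S : {set edge}) (C : {set V}) : bool :=
  [exists L : {set V}, exists R : {set V}, is_bipartition S C L R].

Definition bicomp (S : {set edge}) : nat :=
  #|[set C in comps S | bipartite S C]|.

Definition common_comp (E F : {set edge}) (C : {set V}) : Prop :=
  [/\ C \in comps E, C \in comps F & edges_in F C = edges_in E C].

Definition facet_subgraph (E : {set edge}) (sgn : edge -> bool) (F : {set edge}) : Prop :=
  F \subset E /\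
  bicomp F = (bicomp E).+1 /\
  (forall C, C \in comps F -> bipartite F C -> ~ common_comp E F C ->
     exists L R : {set V}, is_bipartition F C L R /\
       forall e, e \in E :\: F ->
         (sgn e /\ (e.1 \in L \/ e.2 \in L) /\ e.1 \notin R /\ e.2 \notin R) \/
         (~~ sgn e /\ (e.1 \in R \/ e.2 \in R) /\ e.1 \notin L /\ e.2 \notin L)).

End SignedGraphs.

(* Main.v *)
Require Import Defs.
From mathcomp Require Import all_boot.
From Stdlib Require Import Classical.
Set Implicit Arguments. Unset Strict Implicit. Unset Printing Implicit Defensive.

Section Aux.
Variable n : nat.
Implicit Types (S E F : {set 'I_n * 'I_n}) (C D : {set 'I_n}).

Lemma adj_sym S : symmetric (adj S).
Proof. by move=> x y; rewrite /adj orbC. Qed.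

Lemma connect_symS S : connect_sym (adj S).
Proof. exact/sym_connect_sym/adj_sym. Qed.

Lemma compP S C : C \in comps S -> exists x, C = [set y | connect (adj S) x y].
Proof. by case/imsetP => x _ ->; exists x. Qed.

Lemma comp_mem S C x : C \in comps S -> x \in C -> C = [set y | connect (adj S) x y].
Proof.
case/compP=> x0 -> ; rewrite inE => h0.
apply/setP=> y; rewrite !inE.
apply/idP/idP => h.
- rewrite connect_symS in h0; exact: connect_trans h0 h.
- exact: connect_trans h0 h.
Qed.

Lemma comp_closed S C x y : C \in comps S -> x \in C -> connect (adj S) x y -> y \in C.
Proof. by move=> HC Hx Hxy; rewrite (comp_mem HC Hx) inE. Qed.

Lemma edge_closed S C e : C \in comps S -> e \in S -> (e.1 \in C) = (e.2 \in C).
Proof.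
move=> HC He; apply/idP/idP => h.
- apply: comp_closed HC h _; apply: connect1; by rewrite /adj -surjective_pairing He.
- apply: comp_closed HC h _; apply: connect1; by rewrite /adj -surjective_pairing He orbT.
Qed.

Lemma comps_disj S C D x : C \in comps S -> D \in comps S -> x \in C -> x \in D -> C = D.
Proof. by move=> HC HD h1 h2; rewrite (comp_mem HC h1) (comp_mem HD h2). Qed.

Lemma comp_nonempty S C : C \in comps S -> exists x, x \in C.
Proof. by case/compP=> x ->; exists x; rewrite inE connect0. Qed.

Lemma connect_subS E F x y : F \subset E -> connect (adj F) x y -> connect (adj E) x y.
Proof.
move=> sFE; apply: connect_sub => u v; rewrite /adj => /orP[h|h]; apply: connect1; rewrite /adj.
  by rewrite (subsetP sFE _ h).
by rewrite (subsetP sFE _ h) orbT.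
Qed.

Lemma untouched_common E F C : F \subset E -> C \in comps E ->
  (forall e, e \in E -> e.1 \in C -> e \in F) -> common_comp E F C.
Proof.
move=> sFE HC Ht.
have [x Cx] := compP HC.
pose A := [set y | connect (adj F) x y].
have K : forall u v, adj E u v -> u \in A -> v \in A.
  move=> u v huv; rewrite !inE => hu.
  have uC : u \in C by rewrite Cx inE (connect_subS sFE hu).
  apply: connect_trans hu _; apply: connect1; rewrite /adj.
  case/orP: huv => h.
    by rewrite (Ht _ h uC).
  have vC : v \in C by rewrite (edge_closed HC h).
  by rewrite (Ht _ h vC) orbT.
have clA : closed (adj E) A.
  move=> u v huv; apply/idP/idP; first exact: K.
  by apply: K; rewrite adj_sym.
have CA : C = A.
  apply/setP=> y; rewrite Cx !inE.
  apply/idP/idP => h; last exact: connect_subS h.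
  by move: (closed_connect clA h); rewrite !inE connect0 => <-.
split => //.
  by rewrite CA; apply: imset_f.
apply/setP=> e; rewrite !inE; apply/andP/andP => [[h1 h2]|[h1 h2]].
  by split => //; exact: (subsetP sFE).
split => //; case/orP: h2 => h2; first exact: Ht.
by apply: Ht => //; rewrite (edge_closed HC h1).
Qed.

Lemma bip_eq S S' C : edges_in S C = edges_in S' C -> bipartite S C = bipartite S' C.
Proof. by move=> h; rewrite /bipartite /is_bipartition h. Qed.

End Aux.

Theorem mainTheorem4 (n : nat) (E : {set 'I_n * 'I_n}) (sgn : 'I_n * 'I_n -> bool)
  (hE : forall e, e \in E -> e.1 <= e.2)
  (F : {set 'I_n * 'I_n}) (hF : F \subset E)
  (hfacet : facet_subgraph E sgn F) :
  exists G1 : {set 'I_n},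
    [/\ G1 \in comps E,
        ~ common_comp E F G1,
        (forall C, C \in comps E -> ~ common_comp E F C -> C = G1),
        (forall e, e \in E :\: F -> e.1 \in G1 /\ e.2 \in G1) &
        (forall H1 H2 : {set 'I_n},
           H1 \in comps F -> H2 \in comps F -> H1 != H2 ->
           G1 = H1 :|: H2 ->
           bipartite F H1 -> ~ common_comp E F H1 ->
           (bipartite E G1 <-> bipartite F H2))].
Proof.
case: hfacet => _ [hcount hcond].
have [H' [H'F H'b H'nc]] :
    exists H', [/\ H' \in comps F, bipartite F H' & ~ common_comp E F H'].
  apply: NNPP => hn.
  have hsub : [set C in comps F | bipartite F C] \subset [set C in comps E | bipartite E C].
    apply/subsetP => C; rewrite !inE => /andP[h1 h2].
    have : common_comp E F C by apply: NNPP => hc; apply: hn; exists C; split.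
    by case=> hE' _ hed; rewrite hE' -(bip_eq hed) h2.
  move: (subset_leq_card hsub); rewrite /bicomp in hcount; by rewrite hcount ltnn.
have [L [R [hLR hedge]]] := hcond H' H'F H'b H'nc.
have [x H'x] := compP H'F.
pose G1 := [set y | connect (adj E) x y].
have hG1 : G1 \in comps E by apply: imset_f.
have hH'G1 : forall v, v \in H' -> v \in G1.
  by move=> v; rewrite H'x !inE => /(connect_subS hF).
move: hLR; rewrite /is_bipartition => /and3P[/eqP hU _ _].
have hLH : forall v, v \in L -> v \in H' by move=> v hv; rewrite -hU inE hv.
have hRH : forall v, v \in R -> v \in H' by move=> v hv; rewrite -hU inE hv orbT.
have part4 : forall e, e \in E :\: F -> e.1 \in G1 /\ e.2 \in G1.
  move=> e he; have heE : e \in E by move: he; rewrite inE => /andP[].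
  rewrite -(edge_closed hG1 heE); suff : e.1 \in G1 by [].
  case: (hedge e he) => [[_ [[h|h] _]] | [_ [[h|h] _]]].
  - exact/hH'G1/hLH.
  - by rewrite (edge_closed hG1 heE); exact/hH'G1/hLH.
  - exact/hH'G1/hRH.
  - by rewrite (edge_closed hG1 heE); exact/hH'G1/hRH.
exists G1; split => //.
- case=> _ hG1F hed; apply: H'nc.
  have xG1 : x \in G1 by rewrite inE connect0.
  have eq : G1 = H' by rewrite H'x; exact: comp_mem hG1F xG1.
  by rewrite -eq; split.
- move=> C hC hnc; apply: NNPP => hne; apply: hnc.
  apply: untouched_common => // e he h1.
  case: (boolP (e \in F)) => // heF; exfalso; apply: hne.
  have he' : e \in E :\: F by rewrite inE heF he.
  have [h1' _] := part4 e he'.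
  exact: comps_disj hC hG1 h1 h1'.
move=> H1 H2 hH1 hH2 hne hG1eq hb1 hnc1.
have hdis : forall v, v \in H1 -> v \in H2 -> False.
  by move=> v h1 h2; move/eqP: hne; apply; exact: comps_disj hH1 hH2 h1 h2.
split.
- case/existsP=> L' /existsP[R'].
  rewrite /is_bipartition => /and3P[/eqP hU' /eqP hI' /forall_inP hf'].
  apply/existsP; exists (L' :&: H2); apply/existsP; exists (R' :&: H2).
  rewrite /is_bipartition; apply/and3P; split.
  + apply/eqP/setP => v; rewrite !inE.
    have : (v \in L' :|: R') = (v \in G1) by rewrite hU'.
    rewrite hG1eq !inE => h.
    by case h2: (v \in H2); rewrite ?andbT ?andbF // h h2 orbT.
  + apply/eqP/setP => v; rewrite !inE.
    have : (v \in L' :&: R') = (v \in set0) by rewrite hI'.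
    rewrite !inE => h.
    by rewrite andbACA andbA h.
  + apply/forall_inP => e; rewrite inE => /andP[heF htouch].
    have heE : e \in E := subsetP hF _ heF.
    have h1 : e.1 \in H2.
      by case/orP: htouch => // h; rewrite (edge_closed hH2 heF).
    have h2 : e.2 \in H2 by rewrite -(edge_closed hH2 heF).
    have : e \in edges_in E G1 by rewrite inE heE hG1eq inE h1 orbT.
    by move/hf'; rewrite !inE h1 h2 !andbT.
- move=> hb2.
  have hnc2 : ~ common_comp E F H2.
    case=> hH2E _ _.
    have [v2 hv2] := comp_nonempty hH2.
    have hv2G : v2 \in G1 by rewrite hG1eq inE hv2 orbT.
    have e2 := comps_disj hH2E hG1 hv2 hv2G.
    have [v1 hv1] := comp_nonempty hH1.
    by apply: (hdis v1) => //; rewrite e2 hG1eq inE hv1.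
  have [L1 [R1 [hb1' hedge1]]] := hcond H1 hH1 hb1 hnc1.
  have [L2 [R2 [hb2' hedge2]]] := hcond H2 hH2 hb2 hnc2.
  move: hb1'; rewrite /is_bipartition => /and3P[/eqP hU1 /eqP hI1 /forall_inP hf1].
  move: hb2'; rewrite /is_bipartition => /and3P[/eqP hU2 /eqP hI2 /forall_inP hf2].
  have hU1v v : (v \in L1) || (v \in R1) = (v \in H1) by rewrite -in_setU hU1.
  have hU2v v : (v \in L2) || (v \in R2) = (v \in H2) by rewrite -in_setU hU2.
  have hI1v v : v \in L1 -> v \in R1 -> False.
    by move=> a b; move: (hI1) => /setP /(_ v); rewrite !inE a b.
  have hI2v v : v \in L2 -> v \in R2 -> False.
    by move=> a b; move: (hI2) => /setP /(_ v); rewrite !inE a b.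
  have hL1 v : v \in L1 -> v \in H1 by rewrite -hU1v => ->.
  have hR1 v : v \in R1 -> v \in H1 by rewrite -hU1v => ->; rewrite orbT.
  have hL2 v : v \in L2 -> v \in H2 by rewrite -hU2v => ->.
  have hR2 v : v \in R2 -> v \in H2 by rewrite -hU2v => ->; rewrite orbT.
  apply/existsP; exists (L1 :|: R2); apply/existsP; exists (R1 :|: L2).
  rewrite /is_bipartition; apply/and3P; split.
  + apply/eqP/setP => v; rewrite hG1eq !inE -hU1v -hU2v.
    by case: (v \in L1); case: (v \in R1); case: (v \in L2); case: (v \in R2).
  + apply/eqP/setP => v; rewrite !inE.
    apply/negbTE/negP => /andP[/orP[ha|hd] /orP[hb|hc]].
    - exact: hI1v ha hb.
    - exact: hdis v (hL1 _ ha) (hL2 _ hc).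
    - exact: hdis v (hR1 _ hb) (hR2 _ hd).
    - exact: hI2v hc hd.
  + apply/forall_inP => e; rewrite inE => /andP[heE htouch].
    case: (boolP (e \in F)) => heF.
    * have h1 : e.1 \in G1.
        by case/orP: htouch => // h; rewrite (edge_closed hG1 heE).
      move: h1; rewrite hG1eq inE => /orP[h1|h1].
      - have : e \in edges_in F H1 by rewrite inE heF h1.
        by move/hf1 => /orP[/andP[p q]|/andP[p q]]; rewrite !inE p q /= ?andbT ?orbT.
      - have : e \in edges_in F H2 by rewrite inE heF h1.
        by move/hf2 => /orP[/andP[p q]|/andP[p q]]; rewrite !inE p q /= ?andbT ?orbT.
    * have he : e \in E :\: F by rewrite inE heF heE.
      case hs: (sgn e).
      - case: (hedge1 e he) => [[_ [a1 [b1 c1]]]|[]]; last by rewrite hs.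
        case: (hedge2 e he) => [[_ [a2 [b2 c2]]]|[]]; last by rewrite hs.
        case: a1 => p.
        + have q : e.2 \in L2.
            case: a2 => // r; exfalso; exact: hdis _ (hL1 _ p) (hL2 _ r).
          by rewrite !inE p q /= ?andbT ?orbT.
        + have q : e.1 \in L2.
            case: a2 => // r; exfalso; exact: hdis _ (hL1 _ p) (hL2 _ r).
          by rewrite !inE p q /= ?andbT ?orbT.
      - case: (hedge1 e he) => [[]|[_ [a1 [b1 c1]]]]; first by rewrite hs.
        case: (hedge2 e he) => [[]|[_ [a2 [b2 c2]]]]; first by rewrite hs.
        case: a1 => p.
        + have q : e.2 \in R2.
            case: a2 => // r; exfalso; exact: hdis _ (hR1 _ p) (hR2 _ r).
          by rewrite !inE p q /= ?andbT ?orbT.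
        + have q : e.1 \in R2.
            case: a2 => // r; exfalso; exact: hdis _ (hR1 _ p) (hR2 _ r).
          by rewrite !inE p q /= ?andbT ?orbT.
Qed.
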